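(* Let $A=\bigoplus_iA^i$ be a graded commutative algebra with unit $1\in A^0$ over a field $\mathbb{K}$ of characteristic $0$, fix an integer $k$, and let $f\in\operatorname{Hom}^*_{\mathbb{K}}(A,A)$ be homogeneous. The following are equivalent: (1) $f\in\operatorname{Diff}_2(A)$ and $f(1)=0$; (2) for all homogeneous $a,b,c\in A$, \[f(abc)+f(a)bc+(-1)^{\bar a\bar b}f(b)ac+(-1)^{\bar c(\bar a+\bar b)}f(c)ab=f(ab)c+(-1)^{\bar a(\bar b+\bar c)}f(bc)a+(-1)^{\bar b\bar c}f(ac)b;\] (3) the bilinear map $\Phi(a,b)=f(ab)-f(a)b-(-1)^{\bar a\bar f}af(b)$ satisfies $\Phi(a,bc)=\Phi(a,b)c+(-1)^{(\bar a+\bar f)\bar b}b\Phi(a,c)$ for all homogeneous $a,b,c$; (4) $[f,\mu_2]=[[f,\mu_1],\mu_1]$ in $D(A[2k])$.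
   Context: $\bar a$ denotes degree. Elements $a\in A$ act on $A$ by left multiplication, and $[\,,\,]$ is the graded commutator on $\operatorname{Hom}^*_{\mathbb{K}}(A,A)$. Differential operators of order $\le k$: $\operatorname{Diff}_k(A)=0$ for $k<0$ and, for $k\ge0$, $\operatorname{Diff}_k(A)=\{f\in\operatorname{Hom}^*_{\mathbb{K}}(A,A)\mid [f,a]\in\operatorname{Diff}_{k-1}(A)\ \forall a\in A\}$. For a graded vector space $V$, $V[2k]^i=V^{i+2k}$; $D(V)=\prod_{i\ge0}D_i(V)$ with $D_i(V)=\operatorname{Hom}^*_{\mathbb{K}}(\bigodot^{i+1}V,V)$, with the graded Lie bracket $[f,g]=f\bullet g-(-1)^{\bar f\bar g}g\bullet f$ for $f\in D_n(V),g\in D_m(V)$, where $f\bullet g(a_0,\dots,a_{n+m})=\sum_\sigma\varepsilon(\sigma)f(g(a_{\sigma(0)},\dots,a_{\sigma(m)}),a_{\sigma(m+1)},\dots,a_{\sigma(n+m)})$ over $(m+1,n)$-unshuffles with Koszul sign. $\operatorname{Hom}^*_{\mathbb{K}}(A,A)$ is identified with $D_0(A[2k])$, and $\mu_n\in D_n(A[2k])$ (degree $2kn$) is the multiplication $\mu_n(a_0\odot\cdots\odot a_n)=a_0\cdots a_n$. A map satisfying these equivalent conditions is called a quasi-Batalin–Vilkovisky (quasi-BV) operator. *)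

(* Defs.v *)
From mathcomp Require Import all_boot all_order all_algebra.
Set Implicit Arguments. Unset Strict Implicit. Unset Printing Implicit Defensive.
Import GRing.Theory.
Local Open Scope ring_scope.

Section GradedDefs.
Variables (K : fieldType) (A : algType K).

Definition eps (n : int) : K := if odd `|n|%N then -1 else 1.

(* A graded commutative unital K-algebra: G i is the homogeneous component A^i,
   A = \bigoplus_i A^i (spanning + independence), A^i A^j ⊆ A^(i+j), 1 ∈ A^0,
   ab = (-1)^{ij} ba for a ∈ A^i, b ∈ A^j. *)
Record graded_comm_alg (G : int -> A -> Prop) : Prop := GradedCommAlg {
  gr_zero : forall i, G i 0;
  gr_add : forall i a b, G i a -> G i b -> G i (a + b);
  gr_scale : forall i (c : K) a, G i a -> G i (c *: a);
  gr_one : G 0 1;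
  gr_mul : forall i j a b, G i a -> G j b -> G (i + j) (a * b);
  gr_comm : forall i j a b, G i a -> G j b -> a * b = eps (i * j) *: (b * a);
  gr_span : forall a, exists (s : seq int) (c : int -> A),
      (forall i, G i (c i)) /\ a = \sum_(i <- s) c i;
  gr_indep : forall (s : seq int) (c : int -> A), uniq s ->
      (forall i, G i (c i)) -> \sum_(i <- s) c i = 0 ->
      forall i, i \in s -> c i = 0 }.

Variable G : int -> A -> Prop.

Definition homog_op (d : int) (f : A -> A) : Prop :=
  forall i a, G i a -> G (i + d) (f a).

Definition gcomm (d i : int) (f : A -> A) (a : A) : A -> A :=
  fun x => f (a * x) - eps (d * i) *: (a * f x).

(* Diff k d f : the degree-d operator f lies in Diff_k(A)
   (Diff_{-1} = 0; [f,a] ∈ Diff_{k-1} for all homogeneous a) *)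
Fixpoint Diff (k : nat) (d : int) (f : A -> A) : Prop :=
  match k with
  | 0 => forall i a, G i a -> forall x, gcomm d i f a x = 0
  | k'.+1 => forall i a, G i a -> Diff k' (d + i) (gcomm d i f a)
  end.

Definition Phi (f : A -> A) (d i : int) (a b : A) : A :=
  f (a * b) - f a * b - eps (i * d) *: (a * f b).

(* Graded symmetric multilinear maps on V = A[2k], evaluated on lists of
   homogeneous arguments tagged with their degree in V. *)
Definition hop := seq (int * A) -> A.

(* bit masks of length L with exactly t trues: (t, L-t)-unshuffles *)
Fixpoint masks (L t : nat) : seq bitseq :=
  match L with
  | 0 => if t == 0%N then [:: [::]] else [::]
  | L'.+1 =>
      [seq true :: b | b <- match t with 0 => [::] | t'.+1 => masks L' t' end]
      ++ [seq false :: b | b <- masks L' t]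
  end.

(* Koszul sign of the unshuffle moving the selected entries to the front;
   acc = total degree of the unselected entries seen so far *)
Fixpoint kz (acc : int) (b : bitseq) (xs : seq (int * A)) : K :=
  match b, xs with
  | true :: b', x :: xs' => eps (acc * x.1) * kz acc b' xs'
  | false :: b', x :: xs' => kz (acc + x.1) b' xs'
  | _, _ => 1
  end.

Definition sumdeg (xs : seq (int * A)) : int := \sum_(x <- xs) x.1.

Definition bullet (f g : hop) (dg : int) (m : nat) : hop := fun xs =>
  \sum_(b <- masks (size xs) m.+1)
     kz 0 b xs *: f ((dg + sumdeg (mask b xs), g (mask b xs))
                       :: mask (map negb b) xs).

Definition gbr (f : hop) (df : int) (n : nat) (g : hop) (dg : int) (m : nat) : hop :=
  fun xs => bullet f g dg m xs - eps (df * dg) *: bullet g f df n xs.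

(* Hom^*(A,A) identified with D_0(A[2k]) *)
Definition op0 (f : A -> A) : hop := fun xs => if xs is [:: x] then f x.2 else 0.

(* mu_n(a_0 ⊙ ... ⊙ a_n) = a_0 ... a_n (used with n+1 arguments) *)
Definition mu : hop := fun xs => \prod_(x <- xs) x.2.

End GradedDefs.

(* Main.v *)
Require Import Defs.
From mathcomp Require Import all_boot all_order all_algebra zify ring.
Set Implicit Arguments. Unset Strict Implicit. Unset Printing Implicit Defensive.
Import GRing.Theory.
Local Open Scope ring_scope.

Lemma oddzD (m n : int) : odd `|(m + n)%R|%N = odd `|m|%N (+) odd `|n|%N.
Proof.
have h : forall x : nat, odd x = (x %% 2 == 1)%N.
  by move=> x; rewrite modn2; case: (odd x).
rewrite !h; do 3 case: eqP => /=; lia.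
Qed.
Lemma oddzM (m n : int) : odd `|(m * n)%R|%N = odd `|m|%N && odd `|n|%N.
Proof. by rewrite abszM oddM. Qed.

Definition lc (V : zmodType) (X : seq V) (p : {poly int}) : V :=
  \sum_(i < size X) X`_i *~ p`_i.
Lemma lcD (V : zmodType) (X : seq V) p q : lc X p + lc X q = lc X (p + q).
Proof. by rewrite /lc -big_split; apply: eq_bigr => i _; rewrite coefD mulrzDr. Qed.
Lemma lcN (V : zmodType) (X : seq V) p : - lc X p = lc X (- p).
Proof. by rewrite /lc -sumrN; apply: eq_bigr => i _; rewrite coefN mulrNz. Qed.
Lemma lcX (V : zmodType) (X : seq V) n : (n < size X)%N -> X`_n = lc X 'X^n.
Proof.
move=> hn; rewrite /lc (bigD1 (Ordinal hn)) //= coefXn eqxx mulr1z big1 ?addr0 //.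
by move=> j /eqP hj; rewrite coefXn; case: eqP => // hj'; case: hj; apply: val_inj.
Qed.

Ltac lc_rw X l n :=
  lazymatch l with
  | (?t :: ?r) =>
      let e := fresh "e" in
      have e : t = lc X 'X^n := lcX (X:=X) (n:=n) isT;
      rewrite e; clear e; lc_rw X r (S n)
  | nil => idtac
  end.

Ltac lc_solve l :=
  let X := fresh "X" in
  pose X := l; lc_rw X l 0%N; do ![rewrite lcD | rewrite lcN]; apply: (congr1 (lc X)); ring.


Definition Ex (K : fieldType) (A : algType K) (f : A -> A) (i j l : int) (a b c : A) : A :=
  (f (a * b * c) + f a * b * c + eps K (i * j) *: (f b * a * c)
           + eps K (l * (i + j)) *: (f c * a * b))
  - (f (a * b) * c + eps K (i * (j + l)) *: (f (b * c) * a)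
           + eps K (j * l) *: (f (a * c) * b)).

Lemma scalerAl' (K : fieldType) (A : algType K) (k : K) (x y : A) : k *: x * y = k *: (x * y).
Proof. by rewrite scalerAl. Qed.
Lemma scalerAr' (K : fieldType) (A : algType K) (k : K) (x y : A) : x * (k *: y) = k *: (x * y).
Proof. by rewrite scalerAr. Qed.

Ltac signs_close :=
  repeat first [rewrite mulN1r | rewrite mul1r | rewrite mulr1 | rewrite opprK | rewrite scaleN1r | rewrite scale1r].


Lemma LB (K : fieldType) (A : algType K) (G : int -> A -> Prop) (d : int)
  (f : {linear A -> A}) (hG : graded_comm_alg G) (hf : homog_op G d f) i j l a b c :
  G i a -> G j b -> G l c ->
  Phi f d i a (b * c) - (Phi f d i a b * c + eps K ((i + d) * j) *: (b * Phi f d i a c))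
  = Ex f i j l a b c.
Proof.
move=> ha hb hc.
have e1 : a * f (b*c) = eps K (i * (j + l + d)) *: (f (b*c) * a)
  := gr_comm hG ha (hf _ _ (gr_mul hG hb hc)).
have e2 : a * f b = eps K (i * (j + d)) *: (f b * a) := gr_comm hG ha (hf _ _ hb).
have e3 : b * f (a*c) = eps K (j * (i + l + d)) *: (f (a*c) * b)
  := gr_comm hG hb (hf _ _ (gr_mul hG ha hc)).
have e4 : b * f a = eps K (j * (i + d)) *: (f a * b) := gr_comm hG hb (hf _ _ ha).
have e5 : b * a * f c = eps K ((j + i) * (l + d)) *: (f c * (b * a))
  := gr_comm hG (gr_mul hG hb ha) (hf _ _ hc).
have e6 : b * a = eps K (j * i) *: (a * b) := gr_comm hG hb ha.
rewrite /Phi /Ex !mulrBl !mulrBr !scalerBr -!scalerAl -!scalerAr !mulrA.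
rewrite e1 e2 e5 e6 e3 e4 -!scalerAl -!scalerAr !mulrA !scalerA.
rewrite /eps; do ![rewrite oddzM | rewrite oddzD].
move: (f (a*b*c)) (f a * b * c) (f b * a * c) (f c * a * b) (f (a * b) * c) (f (b * c) * a) (f (a * c) * b).
move: (odd `|i|%N) (odd `|j|%N) (odd `|l|%N) (odd `|d|%N).
case; case; case; case => /= t1 t2 t3 t4 t5 t6 t7;
  do ?[rewrite mulN1r | rewrite mul1r | rewrite mulr1 | rewrite opprK | rewrite scaleN1r | rewrite scale1r]; lc_solve [:: t1; t2; t3; t4; t5; t6; t7].
Qed.


Lemma LA (K : fieldType) (A : algType K) (G : int -> A -> Prop) (d : int)
  (f : {linear A -> A}) (hG : graded_comm_alg G) (hf : homog_op G d f) i j l a b c :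
  f 1 = 0 -> G i a -> G j b -> G l c ->
  gcomm (d + i + j) l (gcomm (d + i) j (gcomm d i f a) b) c 1 = Ex f i j l a b c.
Proof.
move=> hf1 ha hb hc.
have e1 : a * f (b*c) = eps K (i * (j + l + d)) *: (f (b*c) * a)
  := gr_comm hG ha (hf _ _ (gr_mul hG hb hc)).
have e3 : b * f (a*c) = eps K (j * (i + l + d)) *: (f (a*c) * b)
  := gr_comm hG hb (hf _ _ (gr_mul hG ha hc)).
have e5 : b * a * f c = eps K ((j + i) * (l + d)) *: (f c * (b * a))
  := gr_comm hG (gr_mul hG hb ha) (hf _ _ hc).
have e6 : b * a = eps K (j * i) *: (a * b) := gr_comm hG hb ha.
have e7 : c * f (a*b) = eps K (l * (i + j + d)) *: (f (a*b) * c)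
  := gr_comm hG hc (hf _ _ (gr_mul hG ha hb)).
have e8 : c * a * f b = eps K ((l + i) * (j + d)) *: (f b * (c * a))
  := gr_comm hG (gr_mul hG hc ha) (hf _ _ hb).
have e9 : c * a = eps K (l * i) *: (a * c) := gr_comm hG hc ha.
have e10 : c * b * f a = eps K ((l + j) * (i + d)) *: (f a * (c * b))
  := gr_comm hG (gr_mul hG hc hb) (hf _ _ ha).
have e11 : c * b = eps K (l * j) *: (b * c) := gr_comm hG hc hb.
rewrite /gcomm !mulr1 hf1 mulr0 scaler0 subr0.
rewrite !(mulrBl, mulrBr, mulrDl, mulrDr, mulNr, mulrN, scalerDr, scalerBr, scalerN, scalerAl', scalerAr', scalerA, mulrA).
rewrite e1 e3 e5 e7 e8 e10 e6 e9 e11 !(scalerAr', scalerAl', scalerDr, scalerBr, scalerN, scalerA, mulrA).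
rewrite /Ex /eps; do ![rewrite oddzM | rewrite oddzD].
move: (f (a*b*c)) (f a * b * c) (f b * a * c) (f c * a * b) (f (a * b) * c) (f (b * c) * a) (f (a * c) * b).
move: (odd `|i|%N) (odd `|j|%N) (odd `|l|%N) (odd `|d|%N).
case; case; case; case => /= t1 t2 t3 t4 t5 t6 t7;
  signs_close; lc_solve [:: t1; t2; t3; t4; t5; t6; t7].
Qed.

Lemma LC (K : fieldType) (A : algType K) (G : int -> A -> Prop) (d k : int)
  (f : {linear A -> A}) (hG : graded_comm_alg G) (hf : homog_op G d f) (x y z : int * A) :
  G (x.1 + 2 * k) x.2 -> G (y.1 + 2 * k) y.2 -> G (z.1 + 2 * k) z.2 ->
         gbr (op0 f) d 0 (@mu K A) (2 * k * 2) 2 [:: x; y; z]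
         - gbr (gbr (op0 f) d 0 (@mu K A) (2 * k) 1) (d + 2 * k) 1
               (@mu K A) (2 * k) 1 [:: x; y; z]
  = - (Ex f (x.1 + 2 * k) (y.1 + 2 * k) (z.1 + 2 * k) x.2 y.2 z.2
       + Ex f (x.1 + 2 * k) (y.1 + 2 * k) (z.1 + 2 * k) x.2 y.2 z.2).
Proof.
move: x y z => [x1 a] [y1 b] [z1 c] /= ha hb hc.
rewrite /gbr /bullet /= !big_cons !big_nil /= /mu /sumdeg /= !big_cons !big_nil /=.
set i := x1 + 2 * k in ha *; set j := y1 + 2 * k in hb *; set l := z1 + 2 * k in hc *.
have e1 : a * c * b = eps K (l * j) *: (a * b * c).
  by rewrite -mulrA (gr_comm hG hc hb) -scalerAr mulrA.
have e2 : b * c * a = eps K ((j + l) * i) *: (a * b * c).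
  by rewrite (gr_comm hG (gr_mul hG hb hc) ha) mulrA.
have e3 : f a * c * b = eps K (l * j) *: (f a * b * c).
  by rewrite -mulrA (gr_comm hG hc hb) -scalerAr mulrA.
have e4 : f b * c * a = eps K (l * i) *: (f b * a * c).
  by rewrite -mulrA (gr_comm hG hc ha) -scalerAr mulrA.
have e5 : f c * b * a = eps K (j * i) *: (f c * a * b).
  by rewrite -mulrA (gr_comm hG hb ha) -scalerAr mulrA.
rewrite !mulr1 !mul0r !add0r !addr0 !mulrA.
rewrite !(mulrBl, mulrBr, mulrDl, mulrDr, mulNr, mulrN, scalerDr, scalerBr, scalerN, scalerAl', scalerAr', scalerA, mulrA).
rewrite e1 e2 e3 e4 e5 !linearZ /= !(scalerDr, scalerBr, scalerN, scalerA).
rewrite /Ex /eps; do ![rewrite oddzM | rewrite oddzD].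
move: (f (a*b*c)) (f a * b * c) (f b * a * c) (f c * a * b) (f (a * b) * c) (f (b * c) * a) (f (a * c) * b).
move: (odd `|x1|%N) (odd `|y1|%N) (odd `|z1|%N) (odd `|d|%N) (odd `|k|%N).
case; case; case; case; case => /= t1 t2 t3 t4 t5 t6 t7;
  signs_close; lc_solve [:: t1; t2; t3; t4; t5; t6; t7].
Qed.

Lemma epsD (K : fieldType) (m n : int) : eps K (m + n) = eps K m * eps K n.
Proof.
rewrite /eps oddzD; case: (odd `|m|%N); case: (odd `|n|%N);
  by rewrite /= ?mulrNN ?mulr1 ?mul1r.
Qed.

Lemma LE1 (K : fieldType) (A : algType K) (f : {linear A -> A}) :
  Ex f 0 0 0 1 1 1 = f 1.
Proof.
rewrite /Ex !mulr1 !mul0r ?add0r /eps /= !scale1r.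
lc_solve [:: f 1].
Qed.

Lemma gcommD (K : fieldType) (A : algType K) (D i : int) (g : A -> A) (a : A) :
  (forall x y, g (x + y) = g x + g y) ->
  forall x y, gcomm D i g a (x + y) = gcomm D i g a x + gcomm D i g a y.
Proof.
move=> hg x y; rewrite /gcomm mulrDr !hg mulrDr scalerDr opprD.
by rewrite addrACA.
Qed.

Lemma LI (K : fieldType) (A : algType K) (D l m : int) (g : A -> A) (c x : A) :
  gcomm D l g c x = gcomm D (l + m) g (c * x) 1 - eps K (D * l) *: (c * gcomm D m g x 1).
Proof.
rewrite /gcomm !mulr1 mulrBr scalerBr scalerAr' !scalerA mulrA mulrDr epsD.
set u := (_ *: (c * x * g 1)).
lc_solve [:: g (c * x); eps K (D * l) *: (c * g x); u].
Qed.

Lemma Lgen (K : fieldType) (A : algType K) (G : int -> A -> Prop) (d : int)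
  (f : {linear A -> A}) (hG : graded_comm_alg G) :
  (forall i j l a b c, G i a -> G j b -> G l c ->
     gcomm (d + i + j) l (gcomm (d + i) j (gcomm d i f a) b) c 1 = 0) ->
  Diff G 2 d f.
Proof.
move=> h0 i a ha j b hb l c hc x.
have [s [cs [hcs ->]]] := gr_span hG x.
set g2 := gcomm (d + i) j (gcomm d i f a) b.
have add2 : forall x y, g2 (x + y) = g2 x + g2 y.
  apply: gcommD; apply: gcommD => u v; exact: linearD.
have add3 := gcommD (d + i + j) l c add2.
have z3 : gcomm (d + i + j) l g2 c 0 = 0.
  have h := add3 0 0; rewrite addr0 in h.
  by apply: (addrI (gcomm (d + i + j) l g2 c 0)); rewrite addr0 -h.
elim: s => [|m s IH]; first by rewrite big_nil z3.
rewrite big_cons add3 IH addr0 (LI (d + i + j) l m g2 c (cs m)).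
rewrite h0 //; last first. exact: (gr_mul hG hc (hcs m)).
by rewrite h0 // mulr0 scaler0 subr0.
Qed.

Lemma half0 (K : fieldType) (A : algType K) (v : A) :
  [pchar K] =i pred0 -> v + v = 0 -> v = 0.
Proof.
move=> hc h.
have h2 : (2%:R : K) != 0 by rewrite (pcharf0P _).1.
by rewrite -[v]scale1r -(mulVf h2) -scalerA scaler_nat [v *+ 2]mulr2n h scaler0.
Qed.


Unset Implicit Arguments.

Theorem theorem3p3 (K : fieldType) (A : algType K) (G : int -> A -> Prop)
    (k d : int) (f : {linear A -> A}) :
  [pchar K] =i pred0 -> graded_comm_alg G -> homog_op G d f ->
  [<-> Diff G 2 d f /\ f 1 = 0;
       forall (i j l : int) (a b c : A), G i a -> G j b -> G l c ->
         f (a * b * c) + f a * b * c + eps K (i * j) *: (f b * a * c)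
           + eps K (l * (i + j)) *: (f c * a * b)
         = f (a * b) * c + eps K (i * (j + l)) *: (f (b * c) * a)
           + eps K (j * l) *: (f (a * c) * b);
       forall (i j l : int) (a b c : A), G i a -> G j b -> G l c ->
         Phi f d i a (b * c)
         = Phi f d i a b * c + eps K ((i + d) * j) *: (b * Phi f d i a c);
       forall x y z : int * A,
         G (x.1 + 2 * k) x.2 -> G (y.1 + 2 * k) y.2 -> G (z.1 + 2 * k) z.2 ->
         gbr (op0 f) d 0 (@mu K A) (2 * k * 2) 2 [:: x; y; z]
         = gbr (gbr (op0 f) d 0 (@mu K A) (2 * k) 1) (d + 2 * k) 1
               (@mu K A) (2 * k) 1 [:: x; y; z]].
Proof.
move=> hch hG hf.
tfae=> [[hD hf1] i j l a b c ha hb hc | h2 i j l a b c ha hb hc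
       | h3 x y z hx hy hz | h4].
- apply/eqP; rewrite -subr_eq0; apply/eqP.
  have := LA hG hf hf1 ha hb hc; rewrite /Ex => <-.
  exact: (hD i a ha j b hb l c hc 1).
- apply/eqP; rewrite -subr_eq0 (LB hG hf ha hb hc) /Ex subr_eq0; apply/eqP.
  exact: h2 ha hb hc.
- have hE : Ex f (x.1 + 2 * k) (y.1 + 2 * k) (z.1 + 2 * k) x.2 y.2 z.2 = 0.
    rewrite -(LB hG hf hx hy hz); apply/eqP; rewrite subr_eq0; apply/eqP.
    exact: h3 hx hy hz.
  apply/eqP; rewrite -subr_eq0 (LC hG hf hx hy hz) hE addr0 oppr0 //.
- have E0 : forall i j l a b c, G i a -> G j b -> G l c -> Ex f i j l a b c = 0.
    move=> i j l a b c ha hb hc.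
    have hx : G ((i - 2 * k, a).1 + 2 * k) (i - 2 * k, a).2 by rewrite /= subrK.
    have hy : G ((j - 2 * k, b).1 + 2 * k) (j - 2 * k, b).2 by rewrite /= subrK.
    have hz : G ((l - 2 * k, c).1 + 2 * k) (l - 2 * k, c).2 by rewrite /= subrK.
    have := LC hG hf hx hy hz; rewrite (h4 _ _ _ hx hy hz) subrr /= !subrK.
    move/esym/eqP; rewrite oppr_eq0 => /eqP; exact: half0.
  have hf1 : f 1 = 0.
    by rewrite -LE1; apply: E0; exact: gr_one hG.
  split => //; apply: (Lgen hG) => i j l a b c ha hb hc.
  by rewrite (LA hG hf hf1 ha hb hc); exact: E0.
Qed.
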